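(* Let $L\subset\mathbb{R}^{n+1}$ be an $(n+1)$-dimensional lattice with $|q|^2\in\mathbb{N}_0$ for all $q\in L$. The theta series $\Theta_L(x,w)$ satisfies the differential equation $$\big[\Delta_w-4\pi\omega\,\partial_s\big]\Theta_L(x,w)=0,$$ where $\Delta_w=\sum_{i=0}^n\frac{\partial^2}{\partial w_i^2}$ and $\partial_s$ is the slice derivative with respect to $x$.
   Context: $\mathbb{R}_n$ is the real Clifford algebra generated by $e_1,\dots,e_n$, $e_0=1$; paravectors $x=x_0+\underline{x}$ identified with $\mathbb{R}^{n+1}$; for $x\in H=\mathbb{R}^{n+1}\setminus\mathbb{R}$, $\omega=\underline{x}/\|\underline{x}\|\in\mathbb{S}^{n-1}$ ($\omega^2=-1$), $\mathbb{C}_\omega=\{u+\omega v\}$, and $w=\sum_{i=0}^ne_iw_i$ with $w_i\in\mathbb{C}_\omega$; $\langle q,w\rangle=\sum_iq_iw_i$. Lattice $L=\{\sum m_i\mathfrak{Q}_i: m_i\in\mathbb{Z}\}$. Slice monogenic functions $f(u+\omega v)=\alpha+\omega\beta$ with $(\alpha,\beta)$ satisfying the Cauchy–Riemann system; $*$-product $(\alpha+\omega\beta)*(\gamma+\omega\delta)=(\alpha\gamma-\beta\delta)+\omega(\beta\gamma+\alpha\delta)$; $\exp_*(f)=\sum_kf^{*k}/k!$. The slice derivative of $f=\alpha+\omega\beta$ is $\partial_sf(u+\omega v)=\partial_u\alpha(u,v)+\omega\partial_u\beta(u,v)$. $\Theta_L(x,w)=\sum_{q\in L}\exp_*\big((\pi|q|^2x+2\pi\langle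 q,w\rangle)\omega\big)$; the derivatives $\partial/\partial w_i$ are the complex derivatives in $w_i\in\mathbb{C}_\omega$. *)

(* Defs.v *)
From Stdlib Require Import Reals ZArith.
From Coquelicot Require Import Coquelicot.
Open Scope R_scope.

(* Vectors of R^{n+1} are functions nat -> R, only indices 0..n are used.
   Coquelicot's [sum_n a n] is a 0 + ... + a n  (n+1 terms). *)

(* q = sum_j m_j Q_j, where Qb j is the j-th lattice generator (j = 0..n)
   and Qb j i its i-th coordinate. *)
Definition lattice_pt (n : nat) (Qb : nat -> nat -> R) (m : nat -> Z) : nat -> R :=
  fun i => sum_n (fun j => IZR (m j) * Qb j i) n.

Definition sqnorm (n : nat) (q : nat -> R) : R := sum_n (fun i => q i * q i) n.

(* the generators Q_0..Q_n are linearly independent: L is an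
   (n+1)-dimensional lattice in R^{n+1} *)
Definition lin_indep (n : nat) (Qb : nat -> nat -> R) : Prop :=
  forall c : nat -> R,
    (forall i, (i <= n)%nat -> sum_n (fun j => c j * Qb j i) n = 0) ->
    forall j, (j <= n)%nat -> c j = 0.

Definition Clim_seq (a : nat -> C) : C :=
  (real (Lim_seq (fun N => Re (a N))), real (Lim_seq (fun N => Im (a N)))).

(* Values in C_omega = { a + omega b } are represented by pairs (a,b) : C,
   i.e. via the isomorphism C_omega ~ C, omega |-> Ci.  Under this
   representation the *-product of slice functions is Cmult. *)

Definition exp_star (c : C) : C :=
  Clim_seq (fun N => sum_n (fun k => Cdiv (Cpow c k) (RtoC (INR (fact k)))) N).

(* sum of F m over the box m_0, ..., m_k in [-N, N] *)
Definition zsum (N : nat) (g : Z -> C) : C :=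
  sum_n (fun t => g (Z.of_nat t - Z.of_nat N)%Z) (2 * N).

Fixpoint boxsum (k N : nat) (F : (nat -> Z) -> C) : C :=
  match k with
  | O => zsum N (fun z => F (fun _ => z))
  | S k' => zsum N (fun z => boxsum k' N (fun m => F (fun j => if Nat.eqb j (S k') then z else m j)))
  end.

Definition qdot (n : nat) (q : nat -> R) (w : nat -> C) : C :=
  sum_n (fun i => Cmult (RtoC (q i)) (w i)) n.

(* Theta_L(x, w) on the slice C_omega, with x = u + omega v represented by
   z = (u, v):  sum_{q in L} exp_*((pi |q|^2 x + 2 pi <q,w>) omega),
   the lattice sum taken as the limit of the sums over the boxes
   m in [-N, N]^{n+1}. *)
Definition ThetaL (n : nat) (Qb : nat -> nat -> R) (z : C) (w : nat -> C) : C :=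
  Clim_seq
         (fun N => boxsum n N (fun m =>
            let q := lattice_pt n Qb m in
            exp_star (Cmult (Cplus (Cmult (RtoC (PI * sqnorm n q)) z)
                                   (Cmult (RtoC (2 * PI)) (qdot n q w))) Ci))).

Definition upd (w : nat -> C) (i : nat) (t : C) : nat -> C :=
  fun j => if Nat.eqb j i then t else w j.

(* Main.v *)
Require Import Defs.
From Stdlib Require Import Reals ZArith Lra Lia Psatz FunctionalExtensionality.
From Coquelicot Require Import Coquelicot.
Open Scope R_scope.

Module MC.
From mathcomp Require Import all_boot all_algebra.
From mathcomp Require Import Rstruct.
Import GRing.Theory Num.Theory.

Lemma sum_n_big (f : nat -> R) (n : nat) : sum_n f n = (\sum_(i < n.+1) f i)%R.
Proof.
elim: n => [|n IH].
  rewrite sum_O big_ord_recr big_ord0 /=. by rewrite GRing.add0r.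
rewrite (@sum_Sn R_AbelianMonoid) IH [RHS]big_ord_recr /=; reflexivity.
Qed.

Lemma inv_exists (n : nat) (Qb : nat -> nat -> R) : lin_indep n Qb ->
  exists P : nat -> nat -> R, forall x : nat -> R, forall j, (j <= n)%coq_nat ->
   x j = sum_n (fun i => sum_n (fun k => x k * Qb k i) n * P i j) n.
Proof.
move=> hL.
pose A : 'M[R]_(n.+1) := (\matrix_(j, i) Qb j i)%R.
have fA : row_free A.
  apply: inj_row_free => v Hv.
  apply/matrixP => a b; rewrite (ord1 a) mxE.
  have := hL (fun j => v ord0 (inord j)) _ b (ssrnat.leP (ltn_ord b : (b <= n)%N)).
  rewrite inord_val; apply => i Hi.
  rewrite sum_n_big.
  transitivity ((v *m A)%R ord0 (inord i)); last by rewrite Hv mxE.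
  rewrite mxE.
  apply: eq_bigr => k _. rewrite mxE inord_val inordK; first reflexivity. by apply/ssrnat.leP; apply: le_n_S.
exists (fun i j => pinvmx A (inord i) (inord j)) => x j /ssrnat.leP Hj.
pose v : 'rV[R]_(n.+1) := (\row_(k < n.+1) x k)%R.
have Hv : v = (v *m A *m pinvmx A)%R by rewrite -mulmxA mulmxVp // mulmx1.
have := congr1 (fun M : 'M[R]_(1, n.+1) => M ord0 (inord j : 'I_n.+1)) Hv.
rewrite !mxE inordK // => ->.
rewrite sum_n_big; apply: eq_bigr => i _.
rewrite !mxE sum_n_big inord_val; congr (_ * _)%R.
apply: eq_bigr => k _; by rewrite !mxE.
Qed.
End MC.

Definition cexp (c : C) : C := (exp (fst c) * cos (snd c), exp (fst c) * sin (snd c)).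

Lemma fst_sum (f : nat -> C) N : fst (sum_n f N) = sum_n (fun k => fst (f k)) N.
Proof.
  induction N. now rewrite !sum_O.
  rewrite !sum_Sn, <- IHN. reflexivity.
Qed.
Lemma snd_sum (f : nat -> C) N : snd (sum_n f N) = sum_n (fun k => snd (f k)) N.
Proof.
  induction N. now rewrite !sum_O.
  rewrite !sum_Sn, <- IHN. reflexivity.
Qed.

Lemma Cdiv_RtoC (x : C) (r : R) : r <> 0 -> Cdiv x (RtoC r) = (fst x / r, snd x / r).
Proof.
  intros Hr. destruct x as [x1 x2]. unfold Cdiv, Cmult, Cinv, RtoC; simpl.
  f_equal; field; auto.
Qed.

Lemma fact_neq0 k : INR (fact k) <> 0.
Proof. apply not_0_INR, fact_neq_0. Qed.

Definition pr (c : C) k := fst (Cpow c k) / INR (fact k).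
Definition pim (c : C) k := snd (Cpow c k) / INR (fact k).

Lemma term_le_exp y n : 0 <= y -> y ^ n / INR (fact n) <= exp y.
Proof.
  intros Hy. eapply Rle_trans; [|apply (exp_ge_taylor y n Hy)].
  destruct n. simpl. lra.
  rewrite tech5.
  assert (0 <= sum_f_R0 (fun k => y ^ k / INR (fact k)) n).
  { apply cond_pos_sum. intros k. apply Rdiv_le_0_compat. apply pow_le; auto.
    apply lt_0_INR, lt_O_fact. }
  lra.
Qed.

Lemma Cmod_fst_le (z : C) : Rabs (fst z) <= Cmod z.
Proof. apply re_le_Cmod. Qed.
Lemma Cmod_snd_le (z : C) : Rabs (snd z) <= Cmod z.
Proof.
  destruct z as [a b]. unfold Cmod; simpl.
  rewrite <- sqrt_Rsqr_abs. apply sqrt_le_1_alt. unfold Rsqr. nra.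
Qed.

Lemma radius_inf (g : nat -> R) (K r : R) : 0 <= r ->
  (forall k, Rabs (g k) <= K * r ^ k / INR (fact k)) ->
  forall x, Rbar_lt (Rabs x) (CV_radius g).
Proof.
  intros Hr Hg x.
  destruct (CV_radius_bounded g) as [Hub _].
  assert (H : Rbar_le (Rabs x + 1) (CV_radius g)).
  { apply Hub. exists (Rabs K * exp (r * (Rabs x + 1))). intros n.
    rewrite Rabs_mult, <- RPow_abs.
    eapply Rle_trans. apply Rmult_le_compat_r. apply pow_le, Rabs_pos. apply Hg.
    rewrite (Rabs_pos_eq (Rabs x + 1)) by (pose proof (Rabs_pos x); lra).
    assert (HK : K * r ^ n / INR (fact n) <= Rabs K * (r ^ n / INR (fact n))).
    { unfold Rdiv. rewrite Rmult_assoc. apply Rmult_le_compat_r.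
      apply Rmult_le_pos. apply pow_le; auto. left; apply Rinv_0_lt_compat, lt_0_INR, lt_O_fact.
      apply Rle_abs. }
    eapply Rle_trans. apply Rmult_le_compat_r. apply pow_le. pose proof (Rabs_pos x); lra. exact HK.
    rewrite Rmult_assoc. apply Rmult_le_compat_l. apply Rabs_pos.
    eapply Rle_trans; [|apply (term_le_exp _ n)].
    rewrite Rpow_mult_distr. right; field. apply fact_neq0.
    apply Rmult_le_pos. auto. pose proof (Rabs_pos x); lra. }
  eapply Rbar_lt_le_trans; [|exact H]. simpl. lra.
Qed.

Section ODE.
Variable c : C.
Let a := fst c.
Let b := snd c.

Lemma pr_bound k : Rabs (pr c k) <= 1 * Cmod c ^ k / INR (fact k).
Proof.
  unfold pr. rewrite <- Cmod_pow. unfold Rdiv. rewrite Rabs_mult, Rmult_1_l.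
  rewrite (Rabs_pos_eq (/ _)) by (left; apply Rinv_0_lt_compat, lt_0_INR, lt_O_fact).
  apply Rmult_le_compat_r. left; apply Rinv_0_lt_compat, lt_0_INR, lt_O_fact.
  apply Cmod_fst_le.
Qed.
Lemma pim_bound k : Rabs (pim c k) <= 1 * Cmod c ^ k / INR (fact k).
Proof.
  unfold pim. rewrite <- Cmod_pow. unfold Rdiv. rewrite Rabs_mult, Rmult_1_l.
  rewrite (Rabs_pos_eq (/ _)) by (left; apply Rinv_0_lt_compat, lt_0_INR, lt_O_fact).
  apply Rmult_le_compat_r. left; apply Rinv_0_lt_compat, lt_0_INR, lt_O_fact.
  apply Cmod_snd_le.
Qed.

Lemma rad_pr x : Rbar_lt (Rabs x) (CV_radius (pr c)).
Proof. apply (radius_inf _ 1 (Cmod c)). apply Cmod_ge_0. apply pr_bound. Qed.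
Lemma rad_pim x : Rbar_lt (Rabs x) (CV_radius (pim c)).
Proof. apply (radius_inf _ 1 (Cmod c)). apply Cmod_ge_0. apply pim_bound. Qed.

Lemma PSd_pr k : PS_derive (pr c) k = a * pr c k - b * pim c k.
Proof.
  unfold PS_derive, pr, pim. simpl Cpow. rewrite fact_simpl, mult_INR.
  change (fst (c * Cpow c k)%C) with (fst c * fst (Cpow c k) - snd c * snd (Cpow c k)).
  fold a b. field. split. apply fact_neq0. apply not_0_INR; lia.
Qed.
Lemma PSd_pim k : PS_derive (pim c) k = b * pr c k + a * pim c k.
Proof.
  unfold PS_derive, pr, pim. simpl Cpow. rewrite fact_simpl, mult_INR.
  change (snd (c * Cpow c k)%C) with (fst c * snd (Cpow c k) + snd c * fst (Cpow c k)).
  fold a b. field. split. apply fact_neq0. apply not_0_INR; lia.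
Qed.

Lemma PSeries_lin (p q : nat -> R) (al be t : R) :
  ex_pseries p t -> ex_pseries q t ->
  PSeries (fun k => al * p k + be * q k) t = al * PSeries p t + be * PSeries q t.
Proof.
  intros Hp Hq.
  rewrite <- (PSeries_scal al p), <- (PSeries_scal be q).
  rewrite <- PSeries_plus. apply PSeries_ext. intros; reflexivity.
  apply ex_pseries_scal. apply Rmult_comm. auto.
  apply ex_pseries_scal. apply Rmult_comm. auto.
Qed.

Definition f1 := PSeries (pr c).
Definition f2 := PSeries (pim c).

Lemma d_f1 t : is_derive f1 t (a * f1 t - b * f2 t).
Proof.
  unfold f1, f2. 
  replace (a * PSeries (pr c) t - b * PSeries (pim c) t) with (PSeries (PS_derive (pr c)) t).
  apply is_derive_PSeries. apply rad_pr.
  rewrite (PSeries_ext _ (fun k => a * pr c k + (- b) * pim c k)).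
  rewrite PSeries_lin. ring. apply CV_radius_inside, rad_pr. apply CV_radius_inside, rad_pim.
  intros k; rewrite PSd_pr; ring.
Qed.
Lemma d_f2 t : is_derive f2 t (b * f1 t + a * f2 t).
Proof.
  unfold f1, f2. 
  replace (b * PSeries (pr c) t + a * PSeries (pim c) t) with (PSeries (PS_derive (pim c)) t).
  apply is_derive_PSeries. apply rad_pim.
  rewrite (PSeries_ext _ (fun k => b * pr c k + a * pim c k)).
  rewrite PSeries_lin. ring. apply CV_radius_inside, rad_pr. apply CV_radius_inside, rad_pim.
  intros k; rewrite PSd_pim; ring.
Qed.

End ODE.

Lemma deriv0_const (g : R -> R) : (forall t, is_derive g t 0) -> forall t, g t = g 0.
Proof.
  intros H t.
  destruct (MVT_cor4 g (fun _ => 0) 0 (Rabs (t - 0)) (fun c _ => H c) t (Rle_refl _)) as [x [Hx _]].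
  lra.
Qed.

Lemma f_closed (c : C) t :
  f1 c t = exp (fst c * t) * cos (snd c * t) /\ f2 c t = exp (fst c * t) * sin (snd c * t).
Proof.
  set (a := fst c). set (b := snd c).
  set (g1 := fun t => exp (- a * t) * (f1 c t * cos (b * t) + f2 c t * sin (b * t))).
  set (g2 := fun t => exp (- a * t) * (f2 c t * cos (b * t) - f1 c t * sin (b * t))).
  assert (D1 : forall t, is_derive g1 t 0).
  { intros s. pose proof (d_f1 c s) as H1. pose proof (d_f2 c s) as H2.
    unfold g1. auto_derive.
    - split. eexists; exact H1. split. eexists; exact H2. auto.
    - replace (Derive (fun x : R => f1 c x) s) with (fst c * f1 c s - snd c * f2 c s) by (symmetry; now apply is_derive_unique).
      replace (Derive (fun x : R => f2 c x) s) with (snd c * f1 c s + fst c * f2 c s) by (symmetry; now apply is_derive_unique).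
      fold a b. ring. }
  assert (D2 : forall t, is_derive g2 t 0).
  { intros s. pose proof (d_f1 c s) as H1. pose proof (d_f2 c s) as H2.
    unfold g2. auto_derive.
    - split. eexists; exact H2. split. eexists; exact H1. auto.
    - replace (Derive (fun x : R => f1 c x) s) with (fst c * f1 c s - snd c * f2 c s) by (symmetry; now apply is_derive_unique).
      replace (Derive (fun x : R => f2 c x) s) with (snd c * f1 c s + fst c * f2 c s) by (symmetry; now apply is_derive_unique).
      fold a b. ring. }
  pose proof (deriv0_const g1 D1 t) as E1.
  pose proof (deriv0_const g2 D2 t) as E2.
  assert (F10 : f1 c 0 = 1).
  { unfold f1. rewrite PSeries_0. unfold pr. simpl. field. }
  assert (F20 : f2 c 0 = 0).
  { unfold f2. rewrite PSeries_0. unfold pim. simpl. field. }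
  unfold g1, g2 in E1, E2. rewrite F10, F20 in E1, E2.
  rewrite !Rmult_0_r, exp_0, cos_0, sin_0 in E1, E2.
  assert (Hex : exp (- a * t) * exp (a * t) = 1).
  { rewrite <- exp_plus. replace (- a * t + a * t) with 0 by ring. apply exp_0. }
  pose proof (sin2_cos2 (b * t)) as SC. unfold Rsqr in SC.
  split.
  - transitivity (exp (a * t) * (exp (- a * t) * (f1 c t * cos (b * t) + f2 c t * sin (b * t)) * cos (b * t)
                  - exp (- a * t) * (f2 c t * cos (b * t) - f1 c t * sin (b * t)) * sin (b * t))).
    + replace (f1 c t) with (f1 c t * (exp (- a * t) * exp (a * t)) * (sin (b * t) * sin (b * t) + cos (b * t) * cos (b * t))) at 1 by (rewrite Hex, SC; ring).
      ring.
    + rewrite E1, E2. ring.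
  - transitivity (exp (a * t) * (exp (- a * t) * (f1 c t * cos (b * t) + f2 c t * sin (b * t)) * sin (b * t)
                  + exp (- a * t) * (f2 c t * cos (b * t) - f1 c t * sin (b * t)) * cos (b * t))).
    + replace (f2 c t) with (f2 c t * (exp (- a * t) * exp (a * t)) * (sin (b * t) * sin (b * t) + cos (b * t) * cos (b * t))) at 1 by (rewrite Hex, SC; ring).
      ring.
    + rewrite E1, E2. ring.
Qed.

Lemma lim_PS1 (p : nat -> R) : ex_pseries p 1 -> is_lim_seq (sum_n p) (PSeries p 1).
Proof.
  intros H. apply ex_pseries_R in H. apply Series_correct in H.
  unfold PSeries.
  apply (is_lim_seq_ext (sum_n (fun k => p k * 1 ^ k))).
  intros N. apply sum_n_ext. intros; rewrite pow1; apply Rmult_1_r.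
  exact H.
Qed.

Lemma lim_pr (c : C) : is_lim_seq (sum_n (pr c)) (exp (fst c) * cos (snd c)).
Proof.
  destruct (f_closed c 1) as [H _]. rewrite !Rmult_1_r in H. rewrite <- H.
  apply lim_PS1. apply CV_radius_inside, rad_pr.
Qed.
Lemma lim_pim (c : C) : is_lim_seq (sum_n (pim c)) (exp (fst c) * sin (snd c)).
Proof.
  destruct (f_closed c 1) as [_ H]. rewrite !Rmult_1_r in H. rewrite <- H.
  apply lim_PS1. apply CV_radius_inside, rad_pim.
Qed.

Lemma psum_fst (c : C) N : fst (sum_n (fun k => Cdiv (Cpow c k) (RtoC (INR (fact k)))) N) = sum_n (pr c) N.
Proof.
  rewrite fst_sum. apply sum_n_ext. intros k. rewrite Cdiv_RtoC by apply fact_neq0. reflexivity.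
Qed.
Lemma psum_snd (c : C) N : snd (sum_n (fun k => Cdiv (Cpow c k) (RtoC (INR (fact k)))) N) = sum_n (pim c) N.
Proof.
  rewrite snd_sum. apply sum_n_ext. intros k. rewrite Cdiv_RtoC by apply fact_neq0. reflexivity.
Qed.

Lemma exp_star_cexp (c : C) : exp_star c = cexp c.
Proof.
  unfold exp_star, Clim_seq, cexp.
  rewrite (Lim_seq_ext _ (sum_n (pr c))) by (intros; apply psum_fst).
  rewrite (Lim_seq_ext (fun N => Im _) (sum_n (pim c))) by (intros; apply psum_snd).
  rewrite (is_lim_seq_unique _ _ (lim_pr c)), (is_lim_seq_unique _ _ (lim_pim c)).
  reflexivity.
Qed.

Lemma cexp_add x y : cexp (Cplus x y) = Cmult (cexp x) (cexp y).
Proof.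
  destruct x as [a b], y as [c d]. unfold cexp, Cplus, Cmult; simpl.
  rewrite exp_plus, cos_plus, sin_plus. f_equal; ring.
Qed.

Lemma Cmod_cexp z : Cmod (cexp z) = exp (fst z).
Proof.
  destruct z as [a b]. unfold cexp, Cmod. cbn [fst snd].
  replace ((exp a * cos b) ^ 2 + (exp a * sin b) ^ 2) with (Rsqr (exp a) * (Rsqr (sin b) + Rsqr (cos b))) by (unfold Rsqr; ring).
  rewrite sin2_cos2, Rmult_1_r. rewrite sqrt_Rsqr; auto. left; apply exp_pos.
Qed.

Lemma Cmod_le_sum (w : C) : Cmod w <= Rabs (fst w) + Rabs (snd w).
Proof.
  destruct w as [a b]. unfold Cmod. cbn [fst snd].
  rewrite <- (sqrt_Rsqr (Rabs a + Rabs b)) by (pose proof (Rabs_pos a); pose proof (Rabs_pos b); lra).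
  apply sqrt_le_1_alt. unfold Rsqr.
  pose proof (Rabs_pos a); pose proof (Rabs_pos b).
  assert (a ^ 2 = Rabs a * Rabs a) by (rewrite <- pow2_abs; ring).
  assert (b ^ 2 = Rabs b * Rabs b) by (rewrite <- pow2_abs; ring).
  nra.
Qed.

Lemma lim_bound (u : nat -> R) (l B : R) : is_lim_seq u l -> (forall N, Rabs (u N) <= B) -> Rabs l <= B.
Proof.
  intros Hu Hb. apply Rabs_le.
  split.
  - assert (H := is_lim_seq_le (fun _ => - B) u (-B) l).
    simpl in H. apply H. intros N. specialize (Hb N). apply Rabs_le_between in Hb. lra.
    apply is_lim_seq_const. exact Hu.
  - assert (H := is_lim_seq_le u (fun _ => B) l B).
    simpl in H. apply H. intros N. specialize (Hb N). apply Rabs_le_between in Hb. lra.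
    exact Hu. apply is_lim_seq_const.
Qed.

Lemma sum_n_shift2 (f : nat -> R) N : sum_n f (S (S N)) = f 0%nat + f 1%nat + sum_n (fun k => f (S (S k))) N.
Proof.
  induction N.
  - rewrite !sum_Sn, !sum_O. simpl. unfold plus; simpl. ring.
  - rewrite sum_Sn, IHN, (sum_Sn _ N). unfold plus; simpl. ring.
Qed.

Lemma sum_n_abs_le (f g : nat -> R) N : (forall k, Rabs (f k) <= g k) -> Rabs (sum_n f N) <= sum_n g N.
Proof.
  intros H. induction N.
  - rewrite !sum_O. auto.
  - rewrite !sum_Sn. unfold plus; simpl. eapply Rle_trans. apply Rabs_triang.
    specialize (H (S N)). lra.
Qed.

Lemma exp_partial_le r N : 0 <= r -> sum_n (fun k => r ^ k / INR (fact k)) N <= exp r.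
Proof.
  intros Hr. rewrite sum_n_Reals. apply exp_ge_taylor; auto.
Qed.

Lemma fact_le_SS k : INR (fact k) <= INR (fact (S (S k))).
Proof.
  apply le_INR. rewrite !fact_simpl.
  pose proof (lt_O_fact k). nia.
Qed.

Lemma taylor_comp (p : nat -> R) (z : C) :
  (forall k, Rabs (p k) <= Cmod z ^ k / INR (fact k)) ->
  forall N, Rabs (sum_n (fun k => p (S (S k))) N) <= Cmod z ^ 2 * exp (Cmod z).
Proof.
  intros Hp N.
  eapply Rle_trans. apply (sum_n_abs_le _ (fun k => Cmod z ^ 2 * (Cmod z ^ k / INR (fact k)))).
  - intros k. eapply Rle_trans. apply Hp.
    replace (Cmod z ^ S (S k)) with (Cmod z ^ 2 * Cmod z ^ k) by (simpl; ring).
    unfold Rdiv. rewrite Rmult_assoc. apply Rmult_le_compat_l. apply pow_le, Cmod_ge_0.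
    apply Rmult_le_compat_l. apply pow_le, Cmod_ge_0.
    apply Rinv_le_contravar. apply lt_0_INR, lt_O_fact. apply fact_le_SS.
  - rewrite (sum_n_ext _ (fun k => mult (Cmod z ^ 2) (Cmod z ^ k / INR (fact k)))) by reflexivity.
    rewrite (sum_n_mult_l (K := R_Ring)).
    apply Rmult_le_compat_l. apply pow_le, Cmod_ge_0.
    apply exp_partial_le, Cmod_ge_0.
Qed.

Lemma cexp_taylor z : Cmod (Cminus (Cminus (cexp z) (RtoC 1)) z) <= 2 * (Cmod z ^ 2 * exp (Cmod z)).
Proof.
  eapply Rle_trans. apply Cmod_le_sum.
  replace (2 * (Cmod z ^ 2 * exp (Cmod z))) with ((Cmod z ^ 2 * exp (Cmod z)) + (Cmod z ^ 2 * exp (Cmod z))) by ring.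
  apply Rplus_le_compat.
  - apply (lim_bound (fun N => sum_n (fun k => pr z (S (S k))) N)).
    + apply (is_lim_seq_ext (fun N => sum_n (pr z) (S (S N)) - 1 - fst z)).
      intros N. rewrite sum_n_shift2. unfold pr. simpl. field.
      unfold cexp, Cminus, Cplus, Copp, RtoC; simpl.
      apply is_lim_seq_minus'. apply is_lim_seq_minus'.
      apply (is_lim_seq_ext (fun n => sum_n (pr z) (n + 2))). intros; f_equal; lia.
      apply (is_lim_seq_incr_n (sum_n (pr z)) 2). apply lim_pr.
      apply is_lim_seq_const. apply is_lim_seq_const.
    + apply taylor_comp. intros k. rewrite <- (Rmult_1_l (Cmod z ^ k)). apply pr_bound.
  - apply (lim_bound (fun N => sum_n (fun k => pim z (S (S k))) N)).
    + apply (is_lim_seq_ext (fun N => sum_n (pim z) (S (S N)) - 0 - snd z)).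
      intros N. rewrite sum_n_shift2. unfold pim. simpl. field.
      unfold cexp, Cminus, Cplus, Copp, RtoC; simpl.
      apply is_lim_seq_minus'. apply is_lim_seq_minus'.
      apply (is_lim_seq_ext (fun n => sum_n (pim z) (n + 2))). intros; f_equal; lia.
      apply (is_lim_seq_incr_n (sum_n (pim z)) 2). apply lim_pim.
      apply is_lim_seq_const. apply is_lim_seq_const.
    + apply taylor_comp. intros k. rewrite <- (Rmult_1_l (Cmod z ^ k)). apply pim_bound.
Qed.

Definition zsumG {G : AbelianMonoid} (N : nat) (g : Z -> G) : G :=
  sum_n (fun t => g (Z.of_nat t - Z.of_nat N)%Z) (2 * N).

Fixpoint boxsumG {G : AbelianMonoid} (k N : nat) (F : (nat -> Z) -> G) : G :=
  match k with
  | O => zsumG N (fun z => F (fun _ => z))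
  | S k' => zsumG N (fun z => boxsumG k' N (fun m => F (fun j => if Nat.eqb j (S k') then z else m j)))
  end.

Lemma boxsum_G k N F : boxsum k N F = @boxsumG C_AbelianMonoid k N F.
Proof.
  revert F. induction k; intros F. reflexivity.
  simpl. unfold zsum, zsumG. apply sum_n_ext. intros t. apply IHk.
Qed.

Definition rboxsum (k N : nat) (f : (nat -> Z) -> R) : R := @boxsumG R_AbelianMonoid k N f.

Section Morph.
Context {G H : AbelianMonoid} (phi : G -> H)
  (phi0 : phi zero = zero) (phiplus : forall x y, phi (plus x y) = plus (phi x) (phi y)).

Lemma sum_n_morph (f : nat -> G) N : phi (sum_n f N) = sum_n (fun k => phi (f k)) N.
Proof.
  induction N. now rewrite !sum_O.
  rewrite !sum_Sn, phiplus, IHN. reflexivity.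
Qed.

Lemma boxsumG_morph k N F : phi (boxsumG k N F) = boxsumG k N (fun m => phi (F m)).
Proof.
  revert F. induction k; intros F; simpl; unfold zsumG; rewrite sum_n_morph.
  reflexivity. apply sum_n_ext. intros t. apply IHk.
Qed.
End Morph.

Lemma boxsumG_plus {G : AbelianMonoid} k N (F1 F2 : (nat -> Z) -> G) :
  boxsumG k N (fun m => plus (F1 m) (F2 m)) = plus (boxsumG k N F1) (boxsumG k N F2).
Proof.
  revert F1 F2. induction k; intros F1 F2; simpl; unfold zsumG; rewrite <- sum_n_plus.
  reflexivity. apply sum_n_ext. intros t. apply IHk.
Qed.

Lemma sum_n_le_R (f g : nat -> R) N : (forall k, f k <= g k) -> sum_n f N <= sum_n g N.
Proof.
  intros H. induction N. rewrite !sum_O; auto.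
  rewrite !sum_Sn. unfold plus; simpl. specialize (H (S N)). lra.
Qed.

Lemma rbox_le k N (f g : (nat -> Z) -> R) : (forall m, f m <= g m) -> rboxsum k N f <= rboxsum k N g.
Proof.
  unfold rboxsum. revert f g. induction k; intros f g H; simpl; unfold zsumG; apply sum_n_le_R.
  intros; apply H. intros t. apply IHk. intros; apply H.
Qed.

Lemma rbox_scal k N (c : R) f : rboxsum k N (fun m => c * f m) = c * rboxsum k N f.
Proof.
  unfold rboxsum. symmetry.
  exact (boxsumG_morph (G := R_AbelianMonoid) (H := R_AbelianMonoid) (fun x => c * x) (Rmult_plus_distr_l c) k N f).
Qed.
Lemma rbox_0 k N : rboxsum k N (fun _ => 0) = 0.
Proof.
  rewrite (functional_extensionality (fun _ : nat -> Z => 0) (fun _ : nat -> Z => 0 * 0) (fun _ => eq_sym (Rmult_0_r 0))).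
  rewrite rbox_scal. ring.
Qed.

Lemma rbox_nonneg k N f : (forall m, 0 <= f m) -> 0 <= rboxsum k N f.
Proof. intros H. rewrite <- (rbox_0 k N). apply rbox_le. auto. Qed.

Lemma rbox_opp k N f : rboxsum k N (fun m => - f m) = - rboxsum k N f.
Proof.
  rewrite (functional_extensionality (fun m : nat -> Z => - f m) (fun m => (-1) * f m)) by (intros; ring).
  rewrite rbox_scal. ring.
Qed.
Lemma rbox_plus k N f g : rboxsum k N (fun m => f m + g m) = rboxsum k N f + rboxsum k N g.
Proof. unfold rboxsum. apply (boxsumG_plus (G := R_AbelianMonoid)). Qed.

Lemma rbox_abs k N f : Rabs (rboxsum k N f) <= rboxsum k N (fun m => Rabs (f m)).
Proof.
  apply Rabs_le. split.
  - rewrite <- rbox_opp. apply rbox_le. intros m. pose proof (Rabs_le_between' (f m)). 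
    pose proof (Rle_abs (- f m)). rewrite Rabs_Ropp in H0. lra.
  - apply rbox_le. intros; apply Rle_abs.
Qed.

Lemma sum_n_front (f : nat -> R) M : sum_n f (S M) = f 0%nat + sum_n (fun k => f (S k)) M.
Proof.
  induction M. rewrite sum_Sn, !sum_O. reflexivity.
  rewrite sum_Sn, IHM, (sum_Sn _ M). unfold plus; simpl. ring.
Qed.

Lemma zsum_S (g : Z -> R) N :
  zsumG (G := R_AbelianMonoid) (S N) g = g (- Z.of_nat (S N))%Z + zsumG (G := R_AbelianMonoid) N g + g (Z.of_nat (S N)).
Proof.
  unfold zsumG. replace (2 * S N)%nat with (S (S (2 * N))) by lia.
  rewrite sum_n_front, sum_Sn.
  replace (Z.of_nat 0 - Z.of_nat (S N))%Z with (- Z.of_nat (S N))%Z by lia.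
  replace (Z.of_nat (S (S (2 * N))) - Z.of_nat (S N))%Z with (Z.of_nat (S N)) by lia.
  rewrite (sum_n_ext (fun k => g (Z.of_nat (S k) - Z.of_nat (S N))%Z) (fun t => g (Z.of_nat t - Z.of_nat N)%Z)).
  unfold plus; simpl. ring.
  intros t. f_equal. lia.
Qed.

Lemma zsum_mono (g : Z -> R) N : (forall z, 0 <= g z) ->
  zsumG (G := R_AbelianMonoid) N g <= zsumG (G := R_AbelianMonoid) (S N) g.
Proof. intros H. rewrite zsum_S. pose proof (H (- Z.of_nat (S N))%Z). pose proof (H (Z.of_nat (S N))). lra. Qed.

Lemma zsum_le (f g : Z -> R) N : (forall z, f z <= g z) ->
  zsumG (G := R_AbelianMonoid) N f <= zsumG (G := R_AbelianMonoid) N g.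
Proof. intros H. unfold zsumG. apply sum_n_le_R. auto. Qed.

Lemma rbox_mono_N k N f : (forall m, 0 <= f m) -> rboxsum k N f <= rboxsum k (S N) f.
Proof.
  unfold rboxsum. revert f. induction k; intros f H; simpl.
  - apply zsum_mono. auto.
  - eapply Rle_trans. apply zsum_le. intros z. apply IHk. intros; apply H.
    apply zsum_mono. intros z. apply (rbox_nonneg k (S N)). intros; apply H.
Qed.

Definition zsumR (N : nat) (g : Z -> R) : R := zsumG (G := R_AbelianMonoid) N g.

Lemma zsum_scal N (c : R) g : zsumR N (fun z => c * g z) = c * zsumR N g.
Proof. unfold zsumR, zsumG. apply (sum_n_mult_l (K := R_Ring)). Qed.

Fixpoint prodn (f : nat -> R) (k : nat) : R :=
  match k with O => f O | S k' => prodn f k' * f (S k') end.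

Lemma prodn_ext_loc f g k : (forall j, (j <= k)%nat -> f j = g j) -> prodn f k = prodn g k.
Proof.
  induction k; intros H; simpl. apply H; lia.
  rewrite IHk by (intros; apply H; lia). rewrite H by lia. reflexivity.
Qed.

Lemma prodn_nonneg f k : (forall j, 0 <= f j) -> 0 <= prodn f k.
Proof. induction k; intros H; simpl. auto. apply Rmult_le_pos; auto. Qed.

Lemma rbox_prod k N (phi : Z -> R) :
  rboxsum k N (fun m => prodn (fun j => phi (m j)) k) = (zsumR N phi) ^ (S k).
Proof.
  induction k.
  - unfold rboxsum; simpl. unfold zsumR. rewrite Rmult_1_r. reflexivity.
  - unfold rboxsum; simpl boxsumG. fold (rboxsum k N).
    transitivity (zsumR N (fun z => phi z * rboxsum k N (fun m => prodn (fun j => phi (m j)) k))).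
    + unfold zsumR, zsumG. apply sum_n_ext. intros t.
      rewrite <- rbox_scal. unfold rboxsum. f_equal. apply functional_extensionality. intros m.
      simpl prodn. rewrite Nat.eqb_refl. rewrite Rmult_comm. f_equal.
      apply prodn_ext_loc. intros j Hj. destruct (Nat.eqb_spec j (S k)). lia. reflexivity.
    + rewrite IHk.
      rewrite (functional_extensionality (fun z => phi z * zsumR N phi ^ S k) (fun z => zsumR N phi ^ S k * phi z)) by (intros; ring).
      rewrite zsum_scal. simpl. ring.
Qed.

Lemma zsum_geom (psi : Z -> R) (rho : R) : 0 <= rho < 1 -> (forall z, 0 <= psi z) ->
  (forall n : nat, psi (Z.of_nat n) <= rho ^ n /\ psi (- Z.of_nat n)%Z <= rho ^ n) ->
  forall N, zsumR N psi <= 1 + 2 * rho / (1 - rho).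
Proof.
  intros Hr Hp Hb N.
  assert (H : zsumR N psi <= 1 + 2 * rho * (1 - rho ^ N) / (1 - rho)).
  { induction N.
    - unfold zsumR, zsumG. simpl. rewrite sum_O. destruct (Hb 0%nat) as [H _]. simpl in H.
      replace (1 + 2 * rho * (1 - 1) / (1 - rho)) with 1 by (field; lra). exact H.
    - unfold zsumR in *. rewrite zsum_S. destruct (Hb (S N)) as [H1 H2].
      apply Rle_trans with (1 + 2 * rho * (1 - rho ^ N) / (1 - rho) + 2 * rho ^ S N). lra.
      right. simpl. field. lra. }
  eapply Rle_trans. exact H. apply Rplus_le_compat_l.
  unfold Rdiv. apply Rmult_le_compat_r. left; apply Rinv_0_lt_compat; lra.
  pose proof (pow_le rho N ltac:(lra)). nra.
Qed.

Lemma lim_scal (u : nat -> R) (a l : R) : is_lim_seq u l -> is_lim_seq (fun n => a * u n) (a * l).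
Proof. intros H. exact (is_lim_seq_scal_l u a l H). Qed.

Definition Cconv (a : nat -> C) (l : C) : Prop :=
  is_lim_seq (fun N => fst (a N)) (fst l) /\ is_lim_seq (fun N => snd (a N)) (snd l).

Lemma Cconv_Clim a l : Cconv a l -> Clim_seq a = l.
Proof.
  intros [H1 H2]. unfold Clim_seq. destruct l as [l1 l2].
  unfold Re, Im. rewrite (is_lim_seq_unique _ _ H1), (is_lim_seq_unique _ _ H2). reflexivity.
Qed.

Lemma Cconv_plus a b la lb : Cconv a la -> Cconv b lb -> Cconv (fun N => Cplus (a N) (b N)) (Cplus la lb).
Proof.
  intros [A1 A2] [B1 B2]. split; unfold Cplus; cbn [fst snd]; apply is_lim_seq_plus'; auto.
Qed.
Lemma Cconv_scal c a la : Cconv a la -> Cconv (fun N => Cmult c (a N)) (Cmult c la).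
Proof.
  intros [A1 A2]. split; unfold Cmult; cbn [fst snd].
  apply is_lim_seq_minus'; apply lim_scal; auto.
  apply is_lim_seq_plus'; apply lim_scal; auto.
Qed.
Lemma Cconv_minus a b la lb : Cconv a la -> Cconv b lb -> Cconv (fun N => Cminus (a N) (b N)) (Cminus la lb).
Proof.
  intros [A1 A2] [B1 B2]. split; unfold Cminus, Cplus, Copp; cbn [fst snd]; apply is_lim_seq_plus'; auto.
  apply (is_lim_seq_ext (fun N => (-1) * (fst (b N)))); [intros; ring| ].
  replace (- fst lb) with (-1 * (fst lb)) by ring; apply lim_scal; auto.
  apply (is_lim_seq_ext (fun N => (-1) * (snd (b N)))); [intros; ring| ].
  replace (- snd lb) with (-1 * (snd lb)) by ring; apply lim_scal; auto.
Qed.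
Lemma Cconv_ext a b l : (forall N, a N = b N) -> Cconv a l -> Cconv b l.
Proof.
  intros H [A1 A2]. split.
  apply (is_lim_seq_ext _ _ _ (fun N => f_equal fst (H N)) A1).
  apply (is_lim_seq_ext _ _ _ (fun N => f_equal snd (H N)) A2).
Qed.

Lemma box_fst k N F : fst (boxsum k N F) = rboxsum k N (fun m => fst (F m)).
Proof.
  rewrite boxsum_G. unfold rboxsum.
  apply (boxsumG_morph (G := C_AbelianMonoid) (H := R_AbelianMonoid) fst). intros; reflexivity.
Qed.
Lemma box_snd k N F : snd (boxsum k N F) = rboxsum k N (fun m => snd (F m)).
Proof.
  rewrite boxsum_G. unfold rboxsum.
  apply (boxsumG_morph (G := C_AbelianMonoid) (H := R_AbelianMonoid) snd). intros; reflexivity.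
Qed.

Lemma real_conv k (f M : (nat -> Z) -> R) B : (forall m, Rabs (f m) <= M m) -> (forall N, rboxsum k N M <= B) ->
  exists l : R, is_lim_seq (fun N => rboxsum k N f) l /\ Rabs l <= B.
Proof.
  intros Hf HB.
  assert (HM : forall m, 0 <= M m) by (intros m; eapply Rle_trans; [apply Rabs_pos|apply Hf]).
  destruct (ex_finite_lim_seq_incr (fun N => rboxsum k N (fun m => f m + M m)) (2 * B)) as [lu Hu].
  { intros N. apply rbox_mono_N. intros m. specialize (Hf m). apply Rabs_le_between in Hf. lra. }
  { intros N. rewrite rbox_plus. specialize (HB N).
    pose proof (rbox_le k N f M (fun m => Rle_trans _ _ _ (Rle_abs _) (Hf m))). lra. }
  destruct (ex_finite_lim_seq_incr (fun N => rboxsum k N M) B) as [lv Hv].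
  { intros N. apply rbox_mono_N. auto. }
  { auto. }
  assert (Hl : is_lim_seq (fun N => rboxsum k N f) (lu - lv)).
  { apply (is_lim_seq_ext (fun N => rboxsum k N (fun m => f m + M m) - rboxsum k N M)).
    intros N. rewrite rbox_plus. ring.
    apply is_lim_seq_minus'; auto. }
  exists (lu - lv). split. auto.
  apply (lim_bound _ _ _ Hl). intros N. eapply Rle_trans. apply rbox_abs.
  eapply Rle_trans. apply rbox_le. exact Hf. auto.
Qed.

Lemma conv_dom k (F : (nat -> Z) -> C) (M : (nat -> Z) -> R) B :
  (forall m, Cmod (F m) <= M m) -> (forall N, rboxsum k N M <= B) ->
  exists l, Cconv (fun N => boxsum k N F) l /\ Cmod l <= 2 * B.
Proof.
  intros HF HB.
  destruct (real_conv k (fun m => fst (F m)) M B) as [l1 [H1 B1]]; auto.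
  { intros m. eapply Rle_trans. apply Cmod_fst_le. auto. }
  destruct (real_conv k (fun m => snd (F m)) M B) as [l2 [H2 B2]]; auto.
  { intros m. eapply Rle_trans. apply Cmod_snd_le. auto. }
  exists (l1, l2). split. split.
  apply (is_lim_seq_ext _ _ _ (fun N => eq_sym (box_fst k N F)) H1).
  apply (is_lim_seq_ext _ _ _ (fun N => eq_sym (box_snd k N F)) H2).
  eapply Rle_trans. apply Cmod_le_sum. simpl. lra.
Qed.

Lemma taylor_is_derive_C (f : C -> C) (x l : C) (del K : R) : 0 < del -> 0 <= K ->
  (forall h, Cmod h <= del -> Cmod (Cminus (Cminus (f (Cplus x h)) (f x)) (Cmult h l)) <= K * Cmod h ^ 2) ->
  @is_derive C_AbsRing C_NormedModule f x l.
Proof.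
  intros Hd HK H. split. apply is_linear_scal_l.
  intros y Hy. apply (is_filter_lim_locally_unique (K:=C_AbsRing) (V:=AbsRing_NormedModule C_AbsRing)) in Hy. subst y.
  intros eps. apply (locally_le_locally_norm (K:=C_AbsRing) (V:=AbsRing_NormedModule C_AbsRing) x).
  assert (Hp : 0 < Rmin del (eps / (K + 1))).
  { apply Rmin_pos; auto. apply Rdiv_lt_0_compat. apply cond_pos. lra. }
  exists (mkposreal _ Hp). intros z Hz. unfold ball_norm in Hz. simpl in Hz.
  change (Cmod (Cminus (Cminus (f z) (f x)) (Cmult (Cminus z x) l)) <= eps * Cmod (Cminus z x)).
  set (h := Cminus z x) in *.
  replace z with (Cplus x h) by (unfold h; ring).
  change (Cmod h < Rmin del (eps / (K + 1))) in Hz.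
  eapply Rle_trans. apply H. pose proof (Rmin_l del (eps / (K + 1))). lra.
  pose proof (Rmin_r del (eps / (K + 1))). pose proof (Cmod_ge_0 h).
  assert (Cmod h * (K + 1) <= eps).
  { apply Rle_trans with (eps / (K + 1) * (K + 1)). apply Rmult_le_compat_r; lra.
    right; field; lra. }
  simpl. nra.
Qed.

Lemma taylor_is_derive_R (g : R -> R) (x l del K : R) : 0 < del -> 0 <= K ->
  (forall h, Rabs h <= del -> Rabs (g (x + h) - g x - h * l) <= K * h ^ 2) ->
  is_derive g x l.
Proof.
  intros Hd HK H. apply is_derive_Reals. intros eps Heps.
  assert (Hp : 0 < Rmin del (eps / (K + 1))).
  { apply Rmin_pos; auto. apply Rdiv_lt_0_compat; lra. }
  exists (mkposreal _ Hp). intros h Hh0 Hh. simpl in Hh.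
  pose proof (Rmin_l del (eps / (K + 1))). pose proof (Rmin_r del (eps / (K + 1))).
  specialize (H h ltac:(lra)).
  replace ((g (x + h) - g x) / h - l) with ((g (x + h) - g x - h * l) / h) by (field; auto).
  unfold Rdiv. rewrite Rabs_mult, Rabs_inv.
  pose proof (Rabs_pos_lt h Hh0).
  apply Rmult_lt_reg_r with (Rabs h). auto.
  rewrite Rmult_assoc, Rinv_l by lra. rewrite Rmult_1_r.
  eapply Rle_lt_trans. exact H.
  rewrite <- (pow2_abs h).
  assert (Rabs h * (K + 1) < eps).
  { apply Rlt_le_trans with (eps / (K + 1) * (K + 1)). apply Rmult_lt_compat_r; lra.
    right; field; lra. }
  nra.
Qed.

Lemma box_plus k N F G : boxsum k N (fun m => Cplus (F m) (G m)) = Cplus (boxsum k N F) (boxsum k N G).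
Proof. rewrite !boxsum_G. apply (boxsumG_plus (G := C_AbelianMonoid)). Qed.
Lemma box_scal k N (c : C) F : boxsum k N (fun m => Cmult c (F m)) = Cmult c (boxsum k N F).
Proof.
  rewrite !boxsum_G. symmetry.
  apply (boxsumG_morph (G := C_AbelianMonoid) (H := C_AbelianMonoid) (fun x => Cmult c x)).
  intros; simpl. apply Cmult_plus_distr_l.
Qed.
Lemma box_minus k N F G : boxsum k N (fun m => Cminus (F m) (G m)) = Cminus (boxsum k N F) (boxsum k N G).
Proof.
  rewrite (functional_extensionality (fun m => Cminus (F m) (G m)) (fun m => Cplus (F m) (Cmult (RtoC (-1)) (G m))))
    by (intros; unfold Cminus; ring_simplify; reflexivity).
  rewrite box_plus, box_scal. unfold Cminus. ring.
Qed.

Lemma Cconv_unique a l1 l2 : Cconv a l1 -> Cconv a l2 -> l1 = l2.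
Proof. intros H1 H2. rewrite <- (Cconv_Clim _ _ H1). apply Cconv_Clim; auto. Qed.

Lemma Cmod_mult' x y : Cmod (Cmult x y) = Cmod x * Cmod y.
Proof. apply Cmod_mult. Qed.

Section Key.
Variables (k : nat) (al be ga : (nat -> Z) -> C) (del B : R) (M : (nat -> Z) -> R).
Hypothesis Hdel : 0 < del.
Hypothesis HM : forall m, Cmod (ga m) * exp (fst (al m)) * ((1 + Cmod (be m) + Cmod (be m) ^ 2) * exp (Cmod (be m) * del)) <= M m.
Hypothesis HB : forall N, rboxsum k N M <= B.

Definition Tk (h : C) m := Cmult (ga m) (cexp (Cplus (al m) (Cmult (be m) h))).
Definition Dk m := Cmult (ga m) (Cmult (be m) (cexp (al m))).
Definition Phi h := Clim_seq (fun N => boxsum k N (Tk h)).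
Definition Psi := Clim_seq (fun N => boxsum k N Dk).

Lemma aux_pos m : 0 <= Cmod (ga m) * exp (fst (al m)).
Proof. apply Rmult_le_pos. apply Cmod_ge_0. left; apply exp_pos. Qed.

Lemma key_conv h : Cmod h <= del -> Cconv (fun N => boxsum k N (Tk h)) (Phi h).
Proof.
  intros Hh.
  destruct (conv_dom k (Tk h) M B) as [l [Hl _]]; auto.
  - intros m. unfold Tk. rewrite Cmod_mult', Cmod_cexp. unfold Cplus at 1. cbn [fst].
    rewrite exp_plus. eapply Rle_trans; [|apply HM].
    rewrite <- Rmult_assoc. apply Rmult_le_compat_l. apply aux_pos.
    pose proof (Cmod_ge_0 (be m)).
    assert (fst (Cmult (be m) h) <= Cmod (be m) * del).
    { eapply Rle_trans. apply Rle_abs. eapply Rle_trans. apply Cmod_fst_le.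
      rewrite Cmod_mult'. apply Rmult_le_compat_l; auto. }
    assert (exp (fst (Cmult (be m) h)) <= exp (Cmod (be m) * del)).
    { destruct H0. left; apply exp_increasing; auto. rewrite H0; lra. }
    pose proof (exp_pos (Cmod (be m) * del)).
    nra.
  - unfold Phi. rewrite (Cconv_Clim _ _ Hl). auto.
Qed.

Lemma key_convD : Cconv (fun N => boxsum k N Dk) Psi.
Proof.
  destruct (conv_dom k Dk M B) as [l [Hl _]]; auto.
  - intros m. unfold Dk. rewrite !Cmod_mult', Cmod_cexp. eapply Rle_trans; [|apply HM].
    replace (Cmod (ga m) * (Cmod (be m) * exp (fst (al m)))) with (Cmod (ga m) * exp (fst (al m)) * Cmod (be m)) by ring.
    apply Rmult_le_compat_l. apply aux_pos.
    pose proof (Cmod_ge_0 (be m)).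
    assert (1 <= exp (Cmod (be m) * del)).
    { rewrite <- exp_0. destruct (Rle_lt_or_eq_dec 0 (Cmod (be m) * del)). nra.
      left; apply exp_increasing; auto. rewrite <- e; lra. }
    nra.
  - unfold Psi. rewrite (Cconv_Clim _ _ Hl). auto.
Qed.

Lemma key_taylor h : Cmod h <= del ->
  Cmod (Cminus (Cminus (Phi (Cplus 0 h)) (Phi 0)) (Cmult h Psi)) <= 4 * B * Cmod h ^ 2.
Proof.
  intros Hh.
  rewrite (Cplus_0_l h).
  set (Rm := fun m => Cminus (Cminus (Tk h m) (Tk 0 m)) (Cmult h (Dk m))).
  assert (HR : forall m, Cmod (Rm m) <= 2 * Cmod h ^ 2 * M m).
  { intros m. unfold Rm, Tk, Dk.
    replace (Cplus (al m) (Cmult (be m) 0)) with (al m) by ring.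
    rewrite cexp_add.
    replace (Cminus (Cminus (Cmult (ga m) (Cmult (cexp (al m)) (cexp (Cmult (be m) h))))
       (Cmult (ga m) (cexp (al m)))) (Cmult h (Cmult (ga m) (Cmult (be m) (cexp (al m))))))
      with (Cmult (Cmult (ga m) (cexp (al m))) (Cminus (Cminus (cexp (Cmult (be m) h)) (RtoC 1)) (Cmult (be m) h)))
      by ring.
    rewrite !Cmod_mult', Cmod_cexp.
    eapply Rle_trans. apply Rmult_le_compat_l. apply aux_pos. apply cexp_taylor.
    rewrite Cmod_mult'.
    pose proof (Cmod_ge_0 (be m)). pose proof (Cmod_ge_0 h).
    assert (E : exp (Cmod (be m) * Cmod h) <= exp (Cmod (be m) * del)).
    { destruct (Rle_lt_or_eq_dec _ _ (Rmult_le_compat_l _ _ _ H Hh)).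
      left; apply exp_increasing; auto. rewrite e; lra. }
    specialize (HM m). pose proof (aux_pos m).
    pose proof (exp_pos (Cmod (be m) * Cmod h)).
    assert (Cmod (be m) ^ 2 * exp (Cmod (be m) * del) <= (1 + Cmod (be m) + Cmod (be m) ^ 2) * exp (Cmod (be m) * del)).
    { apply Rmult_le_compat_r. left; apply exp_pos. lra. }
    assert (Cmod (ga m) * exp (fst (al m)) * (Cmod (be m) ^ 2 * exp (Cmod (be m) * del)) <= M m).
    { eapply Rle_trans; [|exact HM]. apply Rmult_le_compat_l; auto. }
    assert (Cmod (be m) ^ 2 * exp (Cmod (be m) * Cmod h) <= Cmod (be m) ^ 2 * exp (Cmod (be m) * del)).
    { apply Rmult_le_compat_l; auto. apply pow_le; auto. }
    assert (HH : Cmod (ga m) * exp (fst (al m)) * (Cmod (be m) ^ 2 * exp (Cmod (be m) * Cmod h)) <= M m).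
    { eapply Rle_trans; [|exact H4]. apply Rmult_le_compat_l; auto. }
    replace (Cmod (ga m) * exp (fst (al m)) * (2 * ((Cmod (be m) * Cmod h) ^ 2 * exp (Cmod (be m) * Cmod h))))
      with (2 * Cmod h ^ 2 * (Cmod (ga m) * exp (fst (al m)) * (Cmod (be m) ^ 2 * exp (Cmod (be m) * Cmod h)))) by ring.
    apply Rmult_le_compat_l. pose proof (pow2_ge_0 (Cmod h)); lra. exact HH. }
  destruct (conv_dom k Rm (fun m => 2 * Cmod h ^ 2 * M m) (2 * Cmod h ^ 2 * B) HR) as [l [Hl Hlb]].
  { intros N. rewrite rbox_scal. apply Rmult_le_compat_l. pose proof (pow2_ge_0 (Cmod h)); lra. auto. }
  assert (Hl2 : Cconv (fun N => boxsum k N Rm) (Cminus (Cminus (Phi h) (Phi 0)) (Cmult h Psi))).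
  { apply (Cconv_ext (fun N => Cminus (Cminus (boxsum k N (Tk h)) (boxsum k N (Tk 0))) (Cmult h (boxsum k N Dk)))).
    intros N. unfold Rm. rewrite !box_minus, box_scal. reflexivity.
    apply Cconv_minus. apply Cconv_minus. apply key_conv; auto.
    apply key_conv. rewrite Cmod_0. lra.
    apply Cconv_scal. apply key_convD. }
  rewrite <- (Cconv_unique _ _ _ Hl Hl2). lra.
Qed.
End Key.

Lemma sum_n_nonneg (f : nat -> R) N : (forall k, 0 <= f k) -> 0 <= sum_n f N.
Proof.
  intros H. induction N. rewrite sum_O; auto. rewrite sum_Sn. unfold plus; simpl. specialize (H (S N)); lra.
Qed.

Lemma term_le_sum (f : nat -> R) N j : (forall k, 0 <= f k) -> (j <= N)%nat -> f j <= sum_n f N.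
Proof.
  intros H Hj. induction N.
  - assert (j = 0%nat) by lia. subst. rewrite sum_O. lra.
  - rewrite sum_Sn. unfold plus; simpl. destruct (Nat.eq_dec j (S N)).
    + subst. pose proof (sum_n_nonneg f N H). lra.
    + specialize (IHN ltac:(lia)). specialize (H (S N)). lra.
Qed.

Lemma cauchy_schwarz_n (y : nat -> R) N : (sum_n y N) ^ 2 <= INR (S N) * sum_n (fun i => y i ^ 2) N.
Proof.
  induction N.
  - rewrite !sum_O. simpl. lra.
  - rewrite !sum_Sn.
    change (plus (sum_n y N) (y (S N))) with (sum_n y N + y (S N)).
    change (plus (sum_n (fun i => y i ^ 2) N) (y (S N) ^ 2)) with (sum_n (fun i => y i ^ 2) N + y (S N) ^ 2).
    assert (EA : exists A : R, A = sum_n y N) by (eexists; reflexivity). destruct EA as [A EA]. rewrite <- EA in *.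
    assert (ES : exists S0 : R, S0 = sum_n (fun i => y i ^ 2) N) by (eexists; reflexivity). destruct ES as [S0 ES]. rewrite <- ES in *.
    rewrite (S_INR (S N)) in *. rewrite (S_INR N) in *.
    pose proof (pos_INR N).
    assert (H2 : 2 * A * y (S N) <= A ^ 2 / (INR N + 1) + (INR N + 1) * y (S N) ^ 2).
    { assert (0 <= (A / (INR N + 1) - y (S N)) ^ 2 * (INR N + 1)) by (apply Rmult_le_pos; [apply pow2_ge_0|lra]).
      replace ((A / (INR N + 1) - y (S N)) ^ 2 * (INR N + 1)) with
        (A ^ 2 / (INR N + 1) - 2 * A * y (S N) + (INR N + 1) * y (S N) ^ 2) in H0 by (field; lra).
      lra. }
    assert (H3 : A ^ 2 / (INR N + 1) <= S0).
    { apply (Rmult_le_reg_r (INR N + 1)). lra. unfold Rdiv. rewrite Rmult_assoc, Rinv_l by lra. lra. }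
    nra.
Qed.

Lemma sum_n_abs (f : nat -> R) N : Rabs (sum_n f N) <= sum_n (fun k => Rabs (f k)) N.
Proof. apply sum_n_abs_le. intros; lra. Qed.

Lemma sum_n_le_loc (f g : nat -> R) N : (forall k, (k <= N)%nat -> f k <= g k) -> sum_n f N <= sum_n g N.
Proof.
  intros H. induction N. rewrite !sum_O; apply H; lia.
  rewrite !sum_Sn. unfold plus; simpl. pose proof (H (S N) (le_n _)). 
  assert (sum_n f N <= sum_n g N) by (apply IHN; intros; apply H; lia). lra.
Qed.

Lemma coerc n Qb : lin_indep n Qb -> exists c0, 0 < c0 /\
  forall m : nat -> Z, c0 * sum_n (fun j => IZR (m j) ^ 2) n <= sqnorm n (lattice_pt n Qb m).
Proof.
  intros hL. destruct (MC.inv_exists n Qb hL) as [P HP].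
  set (Kp := sum_n (fun i => sum_n (fun j => Rabs (P i j)) n) n).
  assert (HKp : forall i j, (i <= n)%nat -> (j <= n)%nat -> Rabs (P i j) <= Kp).
  { intros i j Hi Hj. unfold Kp. eapply Rle_trans.
    apply (term_le_sum (fun j => Rabs (P i j)) n j); auto. intros; apply Rabs_pos.
    apply (term_le_sum (fun i => sum_n (fun j => Rabs (P i j)) n) n i); auto.
    intros; apply sum_n_nonneg; intros; apply Rabs_pos. }
  assert (Kp0 : 0 <= Kp) by (unfold Kp; apply sum_n_nonneg; intros; apply sum_n_nonneg; intros; apply Rabs_pos).
  set (D := INR (S n) * INR (S n) * Kp ^ 2 + 1).
  assert (D0 : 0 < D) by (unfold D; pose proof (pos_INR (S n)); pose proof (pow2_ge_0 Kp); nra).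
  exists (/ D). split. apply Rinv_0_lt_compat; auto.
  intros m.
  set (q := lattice_pt n Qb m).
  set (L := sum_n (fun i => Rabs (q i)) n).
  assert (Hm : forall j, (j <= n)%nat -> Rabs (IZR (m j)) <= Kp * L).
  { intros j Hj. rewrite (HP (fun j => IZR (m j)) j Hj).
    eapply Rle_trans. apply sum_n_abs.
    unfold L. rewrite <- (sum_n_mult_l (K := R_Ring)).
    apply sum_n_le_loc. intros i Hi. rewrite Rabs_mult.
    change (mult Kp (Rabs (q i))) with (Kp * Rabs (q i)).
    rewrite Rmult_comm. apply Rmult_le_compat; [apply Rabs_pos | apply Rabs_pos | apply HKp; lia | right; reflexivity]. }
  assert (HL : L ^ 2 <= INR (S n) * sqnorm n q).
  { eapply Rle_trans. apply cauchy_schwarz_n. unfold sqnorm.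
    apply Rmult_le_compat_l. apply pos_INR. apply sum_n_le_R. intros i. rewrite pow2_abs. right; ring. }
  assert (Hs : sum_n (fun j => IZR (m j) ^ 2) n <= INR (S n) * (Kp ^ 2 * (INR (S n) * sqnorm n q))).
  { eapply Rle_trans. apply (sum_n_le_loc _ (fun _ => Kp ^ 2 * (INR (S n) * sqnorm n q))).
    intros j Hj. rewrite <- pow2_abs. specialize (Hm j Hj).
    pose proof (Rabs_pos (IZR (m j))). pose proof (Rabs_pos L).
    assert (0 <= L) by (unfold L; apply sum_n_nonneg; intros; apply Rabs_pos).
    apply Rle_trans with ((Kp * L) ^ 2). apply pow_incr; auto.
    rewrite Rpow_mult_distr. apply Rmult_le_compat_l. apply pow2_ge_0. auto.
    rewrite sum_n_const. right; reflexivity. }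
  assert (0 <= sqnorm n q) by (unfold sqnorm; apply sum_n_nonneg; intros; nra).
  apply (Rmult_le_reg_l D). auto. rewrite <- Rmult_assoc, Rinv_r by lra. rewrite Rmult_1_l.
  unfold D. fold q. nra.
Qed.

Lemma sumR_plus (f g : nat -> R) N : sum_n (fun j => f j + g j) N = sum_n f N + sum_n g N.
Proof. induction N. rewrite !sum_O; auto. rewrite !sum_Sn, IHN. unfold plus; simpl; ring. Qed.
Lemma sumR_scal (c : R) (f : nat -> R) N : sum_n (fun j => c * f j) N = c * sum_n f N.
Proof. induction N. rewrite !sum_O; auto. rewrite !sum_Sn, IHN. unfold plus; simpl; ring. Qed.
Lemma sumR_const (c : R) N : sum_n (fun _ => c) N = INR (S N) * c.
Proof. induction N. rewrite !sum_O; simpl; ring. rewrite !sum_Sn, IHN. unfold plus. cbn -[INR]. rewrite (S_INR (S N)). ring. Qed.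

Lemma exp_le_mono x y : x <= y -> exp x <= exp y.
Proof. intros H. destruct (Rle_lt_or_eq_dec _ _ H). left; apply exp_increasing; auto. subst; lra. Qed.

Lemma cube_le_exp x : 0 <= x -> x ^ 3 <= 27 * exp x.
Proof.
  intros Hx.
  assert (E : exp x = exp (x / 3) ^ 3).
  { simpl. rewrite Rmult_1_r, <- !exp_plus. f_equal. field. }
  rewrite E. pose proof (exp_ineq1_le (x / 3)).
  assert (0 <= x / 3) by lra.
  assert ((x / 3) ^ 3 <= exp (x / 3) ^ 3) by (apply pow_incr; lra).
  replace (x ^ 3) with (27 * (x / 3) ^ 3) by field. lra.
Qed.

Lemma exp_sum_prodn (b : R) (f : nat -> R) N : exp (- b * sum_n f N) = prodn (fun j => exp (- b * f j)) N.
Proof.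
  induction N. rewrite sum_O. reflexivity.
  rewrite sum_Sn. simpl prodn. rewrite <- IHN, <- exp_plus. f_equal. unfold plus; simpl. ring.
Qed.

Lemma exp_pow_nat (b : R) k : exp b ^ k = exp (b * INR k).
Proof.
  induction k. simpl. rewrite Rmult_0_r, exp_0. reflexivity.
  rewrite S_INR. simpl. rewrite IHk, <- exp_plus. f_equal. ring.
Qed.

Lemma abs_le_quad (x eps : R) : 0 < eps -> Rabs x <= eps * x ^ 2 + / (4 * eps).
Proof.
  intros He. rewrite <- pow2_abs.
  assert (0 <= eps * (Rabs x - / (2 * eps)) ^ 2) by (apply Rmult_le_pos; [lra|apply pow2_ge_0]).
  replace (eps * (Rabs x - / (2 * eps)) ^ 2) with (eps * Rabs x ^ 2 - Rabs x + / (4 * eps)) in H by (field; lra).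
  lra.
Qed.

Section Dom.
Variables (n : nat) (Qb : nat -> nat -> R).
Hypothesis hL : lin_indep n Qb.
Definition sq (m : nat -> Z) := sqnorm n (lattice_pt n Qb m).
Definition Lq (m : nat -> Z) := sum_n (fun j => Rabs (lattice_pt n Qb m j)) n.

Lemma sq_nonneg m : 0 <= sq m.
Proof. unfold sq, sqnorm. apply sum_n_nonneg. intros; nra. Qed.

Lemma dom (a c K : R) : 0 < a -> 0 <= c -> 0 <= K ->
  exists (M : (nat -> Z) -> R) (B : R), (forall N, rboxsum n N M <= B) /\
    forall m, K * (1 + sq m) ^ 3 * exp (- a * sq m + c * Lq m) <= M m.
Proof.
  intros Ha Hc HK.
  destruct (coerc n Qb hL) as [c0 [Hc0 Hco]].
  set (eps := a / (4 * (c + 1))).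
  assert (Heps : 0 < eps) by (unfold eps; apply Rdiv_lt_0_compat; lra).
  set (C1 := c * (INR (S n) / (4 * eps))).
  set (C := K * (27 * (4 / a) ^ 3 * exp (a / 4)) * exp C1).
  set (b := a * c0 / 2).
  assert (Hb : 0 < b) by (unfold b; nra).
  set (psi := fun z : Z => exp (- b * IZR z ^ 2)).
  set (rho := exp (- b)).
  assert (Hrho : 0 <= rho < 1).
  { unfold rho. split. left; apply exp_pos. rewrite <- exp_0. apply exp_increasing. lra. }
  assert (C0 : 0 <= C).
  { unfold C. apply Rmult_le_pos. apply Rmult_le_pos; auto. apply Rmult_le_pos. apply Rmult_le_pos. lra.
    apply pow_le. apply Rdiv_le_0_compat; lra. left; apply exp_pos. left; apply exp_pos. }
  exists (fun m => C * prodn (fun j => psi (m j)) n).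
  exists (C * (1 + 2 * rho / (1 - rho)) ^ (S n)).
  split.
  - intros N. rewrite rbox_scal, rbox_prod. apply Rmult_le_compat_l; auto.
    apply pow_incr. split.
    + unfold zsumR, zsumG. apply sum_n_nonneg. intros; unfold psi; left; apply exp_pos.
    + apply zsum_geom; auto. intros; unfold psi; left; apply exp_pos.
      intros k. unfold psi, rho. rewrite exp_pow_nat.
      assert (Hk : INR k <= INR k ^ 2).
      { destruct k. simpl; lra. rewrite S_INR. pose proof (pos_INR k). nra. }
      split.
      * rewrite <- INR_IZR_INZ.
        apply exp_le_mono; nra.
      * rewrite opp_IZR, <- INR_IZR_INZ.
        apply exp_le_mono; nra.
  - intros m.
    pose proof (sq_nonneg m) as Hs.
    set (s := sq m) in *.
    assert (HL1 : Lq m <= eps * s + INR (S n) / (4 * eps)).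
    { unfold Lq, s, sq, sqnorm. 
      eapply Rle_trans. apply (sum_n_le_R _ (fun j => eps * (lattice_pt n Qb m j * lattice_pt n Qb m j) + / (4 * eps))).
      intros j. eapply Rle_trans. apply (abs_le_quad _ eps Heps). right; simpl; ring.
      rewrite sumR_plus, sumR_scal, sumR_const. right. field. lra. }
    assert (HL2 : c * Lq m <= a / 4 * s + C1).
    { unfold C1. 
      assert (c * eps <= a / 4).
      { unfold eps. apply (Rmult_le_reg_r (4 * (c + 1))). lra.
        replace (c * (a / (4 * (c + 1))) * (4 * (c + 1))) with (c * a) by (field; lra). nra. }
      assert (c * Lq m <= c * (eps * s + INR (S n) / (4 * eps))) by (apply Rmult_le_compat_l; auto).
      nra. }
    assert (Hcube : (1 + s) ^ 3 <= 27 * (4 / a) ^ 3 * exp (a / 4 * (1 + s))).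
    { pose proof (cube_le_exp (a / 4 * (1 + s)) ltac:(nra)).
      replace ((1 + s) ^ 3) with ((4 / a) ^ 3 * (a / 4 * (1 + s)) ^ 3) by (field; lra).
      rewrite Rmult_assoc. rewrite (Rmult_comm 27). rewrite Rmult_assoc.
      apply Rmult_le_compat_l. apply pow_le. apply Rdiv_le_0_compat; lra. lra. }
    assert (Hco' : exp (- (a / 2) * s) <= prodn (fun j => psi (m j)) n).
    { unfold psi. rewrite <- exp_sum_prodn.
      apply exp_le_mono. pose proof (Hco m) as Hm. change (sqnorm n (lattice_pt n Qb m)) with s in Hm.
      assert (a / 2 * (c0 * sum_n (fun j => IZR (m j) ^ 2) n) <= a / 2 * s) by (apply Rmult_le_compat_l; lra).
      unfold b. lra. }
    apply Rle_trans with (K * (27 * (4 / a) ^ 3 * exp (a / 4 * (1 + s))) * exp (- a * s + (a / 4 * s + C1))).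
    + apply Rmult_le_compat.
      * apply Rmult_le_pos; auto. apply pow_le. lra.
      * left; apply exp_pos.
      * apply Rmult_le_compat_l; auto.
      * destruct (Rle_lt_or_eq_dec _ _ HL2). left; apply exp_increasing; lra. rewrite e. lra.
    + replace (K * (27 * (4 / a) ^ 3 * exp (a / 4 * (1 + s))) * exp (- a * s + (a / 4 * s + C1)))
        with (C * exp (- (a / 2) * s)).
      apply Rmult_le_compat_l; auto.
      assert (E1 : exp (a/4*(1+s)) = exp (a/4) * exp (a/4*s)) by (rewrite <- exp_plus; f_equal; ring).
      assert (E2 : exp (a/4*s) * exp (- a * s + (a/4*s + C1)) = exp C1 * exp (-(a/2)*s)) by (rewrite <- !exp_plus; f_equal; field).
      transitivity (K * (27 * (4/a)^3 * exp (a/4)) * (exp (a/4*s) * exp (-a*s + (a/4*s + C1)))).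
      rewrite E2. unfold C. ring. rewrite E1. ring.
Qed.
End Dom.

Definition arg (n : nat) (Qb : nat -> nat -> R) (z : C) (w : nat -> C) (m : nat -> Z) : C :=
  Cmult (Cplus (Cmult (RtoC (PI * sqnorm n (lattice_pt n Qb m))) z)
               (Cmult (RtoC (2 * PI)) (qdot n (lattice_pt n Qb m) w))) Ci.

Lemma ThetaL_eq n Qb z w : ThetaL n Qb z w = Clim_seq (fun N => boxsum n N (fun m => cexp (arg n Qb z w m))).
Proof.
  unfold ThetaL. f_equal. apply functional_extensionality. intros N. f_equal.
  apply functional_extensionality. intros m. cbv zeta. rewrite exp_star_cexp. reflexivity.
Qed.

Lemma C_eq (x y : C) : fst x = fst y -> snd x = snd y -> x = y.
Proof. destruct x, y; simpl; intros; subst; auto. Qed.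

Lemma sumC_plus (f g : nat -> C) N : sum_n (fun j => Cplus (f j) (g j)) N = Cplus (sum_n f N) (sum_n g N).
Proof. induction N. rewrite !sum_O; auto. rewrite !sum_Sn, IHN. unfold plus; simpl. ring. Qed.

Lemma sum_n_extC (f g : nat -> C) N : (forall j, @eq C (f j) (g j)) -> sum_n f N = sum_n g N.
Proof. intros H. apply sum_n_ext. exact H. Qed.

Lemma sum_ind0 (c : C) i N : (N < i)%nat -> sum_n (fun j => if Nat.eqb j i then c else RtoC 0) N = RtoC 0.
Proof.
  intros H. induction N.
  - rewrite sum_O. destruct (Nat.eqb_spec 0 i). lia. auto.
  - rewrite sum_Sn, IHN by lia. destruct (Nat.eqb_spec (S N) i). lia. unfold plus; simpl. ring.
Qed.

Lemma sum_ind (c : C) i N : (i <= N)%nat -> sum_n (fun j => if Nat.eqb j i then c else RtoC 0) N = c.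
Proof.
  intros H. induction N.
  - rewrite sum_O. destruct (Nat.eqb_spec 0 i). auto. lia.
  - destruct (Nat.eq_dec i (S N)).
    + subst. rewrite sum_Sn, sum_ind0 by lia. rewrite Nat.eqb_refl. unfold plus; simpl. ring.
    + rewrite sum_Sn, IHN by lia. destruct (Nat.eqb_spec (S N) i). lia. unfold plus; simpl. ring.
Qed.

Lemma qdot_upd n q w i t h : (i <= n)%nat ->
  qdot n q (upd w i (Cplus t h)) = Cplus (qdot n q (upd w i t)) (Cmult (RtoC (q i)) h).
Proof.
  intros Hi. unfold qdot.
  rewrite (sum_n_extC _ (fun j => Cplus (Cmult (RtoC (q j)) (upd w i t j)) (if Nat.eqb j i then Cmult (RtoC (q i)) h else RtoC 0))).
  rewrite sumC_plus, sum_ind by auto. reflexivity.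
  intros j. unfold upd. destruct (Nat.eqb_spec j i). subst. ring. ring.
Qed.

Lemma upd_same (w : nat -> C) i : upd w i (w i) = w.
Proof.
  apply functional_extensionality. intros j. unfold upd. destruct (Nat.eqb_spec j i); subst; auto.
Qed.

Definition beU n Qb m := Cmult (RtoC (PI * sqnorm n (lattice_pt n Qb m))) Ci.
Definition beW n Qb i m := Cmult (RtoC (2 * PI * lattice_pt n Qb m i)) Ci.

Lemma arg_shift_u n Qb u v w h m :
  arg n Qb (u + h, v) w m = Cplus (arg n Qb (u, v) w m) (Cmult (beU n Qb m) (RtoC h)).
Proof.
  unfold arg, beU. replace (u + h, v) with (Cplus (u, v) (RtoC h)) by (apply C_eq; simpl; ring). ring.
Qed.

Lemma arg_shift_w n Qb u v w i t h m : (i <= n)%nat ->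
  arg n Qb (u, v) (upd w i (Cplus t h)) m = Cplus (arg n Qb (u, v) (upd w i t) m) (Cmult (beW n Qb i m) h).
Proof.
  intros Hi. unfold arg, beW. rewrite qdot_upd by auto.
  replace (RtoC (2 * PI * lattice_pt n Qb m i)) with (Cmult (RtoC (2 * PI)) (RtoC (lattice_pt n Qb m i)))
    by (apply C_eq; simpl; ring).
  ring.
Qed.

Definition Imw (n : nat) (w : nat -> C) := sum_n (fun j => Rabs (snd (w j))) n.

Lemma fst_arg_le n Qb u v w m : 0 < v ->
  fst (arg n Qb (u, v) w m) <= - PI * v * sq n Qb m + 2 * PI * Imw n w * Lq n Qb m.
Proof.
  intros Hv. unfold arg, sq, Lq, Imw.
  set (q := lattice_pt n Qb m).
  assert (E : fst (Cmult (Cplus (Cmult (RtoC (PI * sqnorm n q)) (u, v)) (Cmult (RtoC (2 * PI)) (qdot n q w))) Ci)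
             = - (PI * sqnorm n q * v) - 2 * PI * sum_n (fun j => q j * snd (w j)) n).
  { transitivity (- (PI * sqnorm n q * v) - 2 * PI * snd (qdot n q w)).
    - unfold Cmult, Cplus, RtoC, Ci. cbn [fst snd]. ring.
    - unfold qdot. rewrite snd_sum. f_equal. f_equal. apply sum_n_ext. intros j.
      unfold Cmult, RtoC. cbn [fst snd]. simpl. ring. }
  rewrite E.
  assert (H : - sum_n (fun j => q j * snd (w j)) n <= sum_n (fun j => Rabs (snd (w j))) n * sum_n (fun j => Rabs (q j)) n).
  { eapply Rle_trans. apply Rle_abs. rewrite Rabs_Ropp. eapply Rle_trans. apply sum_n_abs.
    rewrite <- sumR_scal. apply sum_n_le_loc. intros j Hj. rewrite Rabs_mult, Rmult_comm.
    apply Rmult_le_compat_r. apply Rabs_pos.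
    apply (term_le_sum (fun j => Rabs (snd (w j))) n j); auto. intros; apply Rabs_pos. }
  pose proof PI_RGT_0. nra.
Qed.

Lemma Cmod_RCi r : Cmod (Cmult (RtoC r) Ci) = Rabs r.
Proof.
  unfold Cmod. simpl. rewrite <- (sqrt_Rsqr_abs r). f_equal. unfold Rsqr. ring.
Qed.

Lemma qi_le_L n Qb m i : (i <= n)%nat -> Rabs (lattice_pt n Qb m i) <= Lq n Qb m.
Proof. intros Hi. unfold Lq. apply (term_le_sum (fun j => Rabs (lattice_pt n Qb m j)) n i); auto. intros; apply Rabs_pos. Qed.

Lemma qi_le_s n Qb m i : (i <= n)%nat -> Rabs (lattice_pt n Qb m i) <= 1 + sq n Qb m.
Proof.
  intros Hi. set (x := lattice_pt n Qb m i).
  assert (x * x <= sq n Qb m).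
  { unfold sq, sqnorm. apply (term_le_sum (fun j => lattice_pt n Qb m j * lattice_pt n Qb m j) n i); auto. intros; nra. }
  pose proof (abs_le_quad x (1/4) ltac:(lra)) as H0.
  replace (/ (4 * (1/4))) with 1 in H0 by field.
  replace (x ^ 2) with (x * x) in H0 by ring.
  assert (0 <= x * x) by nra.
  lra.
Qed.

Lemma comb (G P fa bd K Q X : R) : 0 <= G -> 0 <= P -> G * P <= K * Q -> fa + bd <= X ->
  G * exp fa * (P * exp bd) <= K * Q * exp X.
Proof.
  intros HG HP H1 H2.
  replace (G * exp fa * (P * exp bd)) with ((G * P) * exp (fa + bd)) by (rewrite exp_plus; ring).
  apply Rmult_le_compat; auto. apply Rmult_le_pos; auto. left; apply exp_pos. apply exp_le_mono; auto.
Qed.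

Lemma Cmod_one : Cmod (RtoC 1) = 1.
Proof. rewrite Cmod_R. apply Rabs_R1. Qed.

Lemma Imw_nonneg n w : 0 <= Imw n w.
Proof. unfold Imw. apply sum_n_nonneg. intros; apply Rabs_pos. Qed.

Lemma Lq_nonneg n Qb m : 0 <= Lq n Qb m.
Proof. unfold Lq. apply sum_n_nonneg. intros; apply Rabs_pos. Qed.

Lemma HM_U n Qb (hL : lin_indep n Qb) u v w : 0 < v ->
  exists M B, (forall N, rboxsum n N M <= B) /\ forall m,
   Cmod (RtoC 1) * exp (fst (arg n Qb (u, v) w m)) *
   ((1 + Cmod (beU n Qb m) + Cmod (beU n Qb m) ^ 2) * exp (Cmod (beU n Qb m) * (v / 2))) <= M m.
Proof.
  intros hv. pose proof PI_RGT_0. pose proof PI_4.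
  destruct (dom n Qb hL (PI * v / 2) (2 * PI * Imw n w) 16) as [M [B [HB HM]]].
  nra. pose proof (Imw_nonneg n w); nra. lra.
  exists M, B. split; auto. intros m.
  eapply Rle_trans; [|apply HM].
  pose proof (sq_nonneg n Qb m). pose proof (fst_arg_le n Qb u v w m hv).
  unfold beU. change (sqnorm n (lattice_pt n Qb m)) with (sq n Qb m).
  rewrite Cmod_RCi, Rabs_pos_eq by nra.
  apply comb. rewrite Cmod_one; lra. nra.
  rewrite Cmod_one. set (s := sq n Qb m) in *.
  assert (PI * s <= 4 * s) by nra.
  assert (Hsq : (PI * s) ^ 2 <= (4 * s) ^ 2) by (apply pow_incr; nra).
  assert (Hc : (1 + s) ^ 3 = 1 + 3 * s + 3 * s ^ 2 + s ^ 3) by ring.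
  assert (0 <= s ^ 3) by (apply pow_le; lra).
  assert (0 <= s ^ 2) by (apply pow_le; lra).
  replace ((4 * s) ^ 2) with (16 * s ^ 2) in Hsq by ring.
  lra.
  lra.
Qed.

Lemma W_facts n Qb m i : (i <= n)%nat ->
  Cmod (beW n Qb i m) <= 8 * (1 + sq n Qb m) /\
  1 + Cmod (beW n Qb i m) + Cmod (beW n Qb i m) ^ 2 <= 73 * (1 + sq n Qb m) ^ 2 /\
  Cmod (beW n Qb i m) <= 2 * PI * Lq n Qb m /\ 0 <= Cmod (beW n Qb i m).
Proof.
  intros Hi. pose proof PI_RGT_0. pose proof PI_4.
  unfold beW. rewrite Cmod_RCi.
  rewrite Rabs_mult, (Rabs_pos_eq (2 * PI)) by lra.
  pose proof (qi_le_s n Qb m i Hi). pose proof (qi_le_L n Qb m i Hi).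
  pose proof (sq_nonneg n Qb m). pose proof (Rabs_pos (lattice_pt n Qb m i)).
  set (x := Rabs (lattice_pt n Qb m i)) in *. set (s := sq n Qb m) in *.
  assert (h1 : 2 * PI * x <= 8 * (1 + s)) by nra.
  split; [lra|]. split.
  - assert (h2 : (2 * PI * x) ^ 2 <= (8 * (1 + s)) ^ 2) by (apply pow_incr; nra).
    assert (1 <= (1 + s) ^ 2) by nra. nra.
  - split. nra. nra.
Qed.

Lemma HM_W n Qb (hL : lin_indep n Qb) u v w' i (ga : (nat -> Z) -> C) : 0 < v -> (i <= n)%nat ->
  (forall m, Cmod (ga m) <= 8 * (1 + sq n Qb m)) ->
  exists M B, (forall N, rboxsum n N M <= B) /\ forall m,
   Cmod (ga m) * exp (fst (arg n Qb (u, v) w' m)) *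
   ((1 + Cmod (beW n Qb i m) + Cmod (beW n Qb i m) ^ 2) * exp (Cmod (beW n Qb i m) * 1)) <= M m.
Proof.
  intros hv Hi Hga. pose proof PI_RGT_0. pose proof PI_4.
  destruct (dom n Qb hL (PI * v) (2 * PI * (Imw n w' + 1)) 584) as [M [B [HB HM]]].
  nra. pose proof (Imw_nonneg n w'); nra. lra.
  exists M, B. split; auto. intros m.
  eapply Rle_trans; [|apply HM].
  pose proof (sq_nonneg n Qb m). pose proof (fst_arg_le n Qb u v w' m hv).
  destruct (W_facts n Qb m i Hi) as [F1 [F2 [F3 F4]]].
  apply comb. apply Cmod_ge_0. nra.
  - specialize (Hga m). pose proof (Cmod_ge_0 (ga m)).
    set (s := sq n Qb m) in *.
    assert (1 <= 1 + s) by lra.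
    assert (Cmod (ga m) * (1 + Cmod (beW n Qb i m) + Cmod (beW n Qb i m) ^ 2) <= 8 * (1 + s) * (73 * (1 + s) ^ 2)).
    { apply Rmult_le_compat; auto. nra. }
    replace (584 * (1 + s) ^ 3) with (8 * (1 + s) * (73 * (1 + s) ^ 2)) by ring. lra.
  - pose proof (Imw_nonneg n w'). pose proof (Lq_nonneg n Qb m). nra.
Qed.

Lemma Cconv_sum (a : nat -> nat -> C) (l : nat -> C) n :
  (forall i, (i <= n)%nat -> Cconv (a i) (l i)) -> Cconv (fun N => sum_n (fun i => a i N) n) (sum_n l n).
Proof.
  induction n; intros H.
  - rewrite sum_O. apply (Cconv_ext (a 0%nat)). intros; rewrite sum_O; auto. apply H; lia.
  - rewrite sum_Sn. apply (Cconv_ext (fun N => Cplus (sum_n (fun i => a i N) n) (a (S n) N))).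
    intros; rewrite sum_Sn; auto. apply Cconv_plus. apply IHn; intros; apply H; lia. apply H; lia.
Qed.

Lemma box_sum_n k N (F : nat -> (nat -> Z) -> C) j :
  sum_n (fun i => boxsum k N (F i)) j = boxsum k N (fun m => sum_n (fun i => F i m) j).
Proof.
  induction j.
  - rewrite sum_O. f_equal. apply functional_extensionality; intros; rewrite sum_O; auto.
  - rewrite sum_Sn, IHj.
    rewrite (functional_extensionality (fun m => sum_n (fun i => F i m) (S j)) (fun m => Cplus (sum_n (fun i => F i m) j) (F (S j) m)))
      by (intros; rewrite sum_Sn; reflexivity).
    rewrite box_plus. reflexivity.
Qed.

Lemma sumC_RtoC (c : nat -> R) (X : C) j : sum_n (fun i => Cmult (RtoC (c i)) X) j = Cmult (RtoC (sum_n c j)) X.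
Proof.
  induction j. rewrite !sum_O; auto.
  rewrite !sum_Sn, IHj. unfold plus; simpl. apply C_eq; unfold Cmult, Cplus, RtoC; simpl; ring.
Qed.

Lemma lhs_nonneg (G fa b1 b2 : R) : 0 <= G -> 0 <= b1 -> 0 <= G * exp fa * ((1 + b1 + b1 ^ 2) * exp b2).
Proof.
  intros. apply Rmult_le_pos. apply Rmult_le_pos; auto. left; apply exp_pos.
  apply Rmult_le_pos. pose proof (pow2_ge_0 b1). lra. left; apply exp_pos.
Qed.

Lemma B_nonneg k (M : (nat -> Z) -> R) B : (forall m, 0 <= M m) -> (forall N, rboxsum k N M <= B) -> 0 <= B.
Proof. intros H1 H2. eapply Rle_trans. apply (rbox_nonneg k 0 M H1). apply H2. Qed.

Theorem mainTheorem8 (n : nat) (Qb : nat -> nat -> R)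
  (hn : (1 <= n)%nat)
  (hL : lin_indep n Qb)
  (hint : forall m : nat -> Z, exists k : nat, sqnorm n (lattice_pt n Qb m) = INR k) :
  forall (u v : R) (w : nat -> C), 0 < v ->
  exists (a b : R) (d2 : nat -> C),
    is_derive (fun u' => Re (ThetaL n Qb (u', v) w)) u a /\
    is_derive (fun u' => Im (ThetaL n Qb (u', v) w)) u b /\
    (forall i, (i <= n)%nat ->
       exists g : C -> C,
         (forall t : C, @is_derive C_AbsRing C_NormedModule
                          (fun t' => ThetaL n Qb (u, v) (upd w i t')) t (g t)) /\
         @is_derive C_AbsRing C_NormedModule g (w i) (d2 i)) /\
    Cminus (sum_n d2 n) (Cmult (RtoC (4 * PI)) (Cmult Ci (a, b))) = RtoC 0.
Proof.
  intros u v w hv.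
  set (gaU := fun _ : nat -> Z => RtoC 1).
  set (alU := arg n Qb (u, v) w).
  destruct (HM_U n Qb hL u v w hv) as [MU [BU [HBU HMU]]].
  assert (hv2 : 0 < v / 2) by lra.
  assert (BU0 : 0 <= BU).
  { apply (B_nonneg n MU); auto. intros m. eapply Rle_trans; [|apply HMU]. apply lhs_nonneg. apply Cmod_ge_0. apply Cmod_ge_0. }
  set (PsiU := Psi n alU (beU n Qb) gaU).
  assert (EU : forall h : R, ThetaL n Qb (u + h, v) w = Phi n alU (beU n Qb) gaU (RtoC h)).
  { intros h. rewrite ThetaL_eq. unfold Phi, Tk. f_equal. apply functional_extensionality. intros N. f_equal.
    apply functional_extensionality. intros m. rewrite arg_shift_u. unfold gaU, alU. ring. }
  assert (EU0 : ThetaL n Qb (u, v) w = Phi n alU (beU n Qb) gaU (RtoC 0)).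
  { rewrite <- EU. rewrite Rplus_0_r. reflexivity. }
  assert (TU : forall h : R, Rabs h <= v / 2 ->
     Cmod (Cminus (Cminus (ThetaL n Qb (u + h, v) w) (ThetaL n Qb (u, v) w)) (Cmult (RtoC h) PsiU)) <= 4 * BU * h ^ 2).
  { intros h Hh. rewrite EU, EU0.
    pose proof (key_taylor n alU (beU n Qb) gaU (v / 2) BU MU hv2 HMU HBU (RtoC h)) as K.
    rewrite Cmod_R in K. specialize (K Hh). rewrite Cplus_0_l, pow2_abs in K. exact K. }
  exists (fst PsiU), (snd PsiU).
  set (d2 := fun i => Psi n (arg n Qb (u, v) (upd w i (w i))) (beW n Qb i) (beW n Qb i)).
  exists d2.
  split; [|split; [|split]].
  - apply (taylor_is_derive_R _ _ _ (v / 2) (4 * BU)). auto. lra.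
    intros h Hh. specialize (TU h Hh).
    eapply Rle_trans; [|exact TU]. eapply Rle_trans; [|apply Cmod_fst_le].
    right. f_equal. unfold Re. simpl. ring.
  - apply (taylor_is_derive_R _ _ _ (v / 2) (4 * BU)). auto. lra.
    intros h Hh. specialize (TU h Hh).
    eapply Rle_trans; [|exact TU]. eapply Rle_trans; [|apply Cmod_snd_le].
    right. f_equal. unfold Im. simpl. ring.
  - intros i Hi.
    exists (fun t => Psi n (arg n Qb (u, v) (upd w i t)) (beW n Qb i) gaU).
    split.
    + intros t.
      destruct (HM_W n Qb hL u v (upd w i t) i gaU hv Hi) as [M [B [HB HM]]].
      { intros m. unfold gaU. rewrite Cmod_one. pose proof (sq_nonneg n Qb m). lra. }
      assert (B0 : 0 <= B).
      { apply (B_nonneg n M); auto. intros m. eapply Rle_trans; [|apply HM]. apply lhs_nonneg. apply Cmod_ge_0. apply Cmod_ge_0. }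
      set (al := arg n Qb (u, v) (upd w i t)).
      assert (E : forall h, ThetaL n Qb (u, v) (upd w i (Cplus t h)) = Phi n al (beW n Qb i) gaU h).
      { intros h. rewrite ThetaL_eq. unfold Phi, Tk. f_equal. apply functional_extensionality. intros N. f_equal.
        apply functional_extensionality. intros m. rewrite arg_shift_w by auto. unfold gaU, al. ring. }
      assert (E0 : ThetaL n Qb (u, v) (upd w i t) = Phi n al (beW n Qb i) gaU (RtoC 0)).
      { rewrite <- E. f_equal. f_equal. ring. }
      apply (taylor_is_derive_C _ _ _ 1 (4 * B)). lra. lra.
      intros h Hh. rewrite E, E0.
      pose proof (key_taylor n al (beW n Qb i) gaU 1 B M ltac:(lra) HM HB h Hh) as K.
      rewrite Cplus_0_l in K. exact K.
    + destruct (HM_W n Qb hL u v (upd w i (w i)) i (beW n Qb i) hv Hi) as [M [B [HB HM]]].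
      { intros m. destruct (W_facts n Qb m i Hi); auto. }
      assert (B0 : 0 <= B).
      { apply (B_nonneg n M); auto. intros m. eapply Rle_trans; [|apply HM]. apply lhs_nonneg. apply Cmod_ge_0. apply Cmod_ge_0. }
      set (al := arg n Qb (u, v) (upd w i (w i))).
      assert (E : forall h, Psi n (arg n Qb (u, v) (upd w i (Cplus (w i) h))) (beW n Qb i) gaU = Phi n al (beW n Qb i) (beW n Qb i) h).
      { intros h. unfold Psi, Phi, Tk, Dk. f_equal. apply functional_extensionality. intros N. f_equal.
        apply functional_extensionality. intros m. rewrite arg_shift_w by auto. unfold gaU, al. ring. }
      assert (E0 : Psi n (arg n Qb (u, v) (upd w i (w i))) (beW n Qb i) gaU = Phi n al (beW n Qb i) (beW n Qb i) (RtoC 0)).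
      { rewrite <- E. f_equal. f_equal. f_equal. f_equal. ring. }
      apply (taylor_is_derive_C _ _ _ 1 (4 * B)). lra. lra.
      intros h Hh. cbv beta. rewrite E, E0.
      pose proof (key_taylor n al (beW n Qb i) (beW n Qb i) 1 B M ltac:(lra) HM HB h Hh) as K.
      rewrite Cplus_0_l in K. exact K.
  - assert (CU : Cconv (fun N => boxsum n N (Dk alU (beU n Qb) gaU)) PsiU)
      by exact (key_convD n alU (beU n Qb) gaU (v / 2) BU MU hv2 HMU HBU).
    assert (C2 : forall i, (i <= n)%nat -> Cconv (fun N => boxsum n N (Dk alU (beW n Qb i) (beW n Qb i))) (d2 i)).
    { intros i Hi. unfold d2. rewrite upd_same. fold alU.
      destruct (HM_W n Qb hL u v w i (beW n Qb i) hv Hi) as [M [B [HB HM]]].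
      { intros m. destruct (W_facts n Qb m i Hi); auto. }
      exact (key_convD n alU (beW n Qb i) (beW n Qb i) 1 B M ltac:(lra) HM HB). }
    pose proof (Cconv_sum (fun i N => boxsum n N (Dk alU (beW n Qb i) (beW n Qb i))) d2 n C2) as S.
    assert (CR : Cconv (fun N => boxsum n N (fun m => Cmult (RtoC (4 * PI)) (Cmult Ci (Dk alU (beU n Qb) gaU m))))
                   (Cmult (RtoC (4 * PI)) (Cmult Ci PsiU))).
    { apply (Cconv_ext (fun N => Cmult (RtoC (4 * PI)) (Cmult Ci (boxsum n N (Dk alU (beU n Qb) gaU))))).
      intros N. rewrite (box_scal n N (RtoC (4 * PI))), (box_scal n N Ci). reflexivity.
      apply Cconv_scal. apply Cconv_scal. exact CU. }
    assert (EQ : forall N, sum_n (fun i => boxsum n N (Dk alU (beW n Qb i) (beW n Qb i))) n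
                 = boxsum n N (fun m => Cmult (RtoC (4 * PI)) (Cmult Ci (Dk alU (beU n Qb) gaU m)))).
    { intros N. rewrite box_sum_n. f_equal. apply functional_extensionality. intros m.
      set (X := cexp (alU m)). set (q := lattice_pt n Qb m).
      rewrite (sum_n_extC _ (fun i => Cmult (RtoC (- (4 * PI ^ 2) * (q i * q i))) X)).
      rewrite sumC_RtoC, sumR_scal.
      unfold Dk, gaU, beU. fold q. fold X. unfold sqnorm.
      apply C_eq; unfold Cmult, RtoC, Ci; simpl; ring.
      intros i. unfold Dk, beW. fold q. fold X. apply C_eq; unfold Cmult, RtoC, Ci; simpl; ring. }
    pose proof (Cconv_unique _ _ _ (Cconv_ext _ _ _ EQ S) CR) as HE.
    rewrite <- surjective_pairing. rewrite HE. ring.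
Qed.
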